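(* Let $s\ge 1$, $r\ge 2$ and $n_0,\dots,n_s\ge 1$ be integers such that $\sum_{i=0}^s n_i^{-\frac{1}{r-1}}\ge s^{\frac{r}{r-1}}$. For $0\le i\le s$ let $$p_i=1-\frac{s\,n_i^{-\frac{1}{r-1}}}{\sum_{j=0}^s n_j^{-\frac{1}{r-1}}}.$$ Then $0\le p_i\le 1$ for each $0\le i\le s$, $\sum_{i=0}^s p_i=1$, and $\sum_{i=0}^s n_i(1-p_i)^r\le 1$. *)

(* Defs.v *)
From Stdlib Require Import Reals Lra.
Open Scope R_scope.

Definition aw (r : nat) (m : nat) : R := Rpower (INR m) (- (1 / (INR r - 1))).

(* S = sum_{j=0}^s n_j^{-1/(r-1)}  (sum_f_R0 f s = f 0 + ... + f s) *)
Definition Ssum (r s : nat) (n : nat -> nat) : R := sum_f_R0 (fun j => aw r (n j)) s.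

Definition pw (r s : nat) (n : nat -> nat) (i : nat) : R :=
  1 - INR s * aw r (n i) / Ssum r s n.

(* Main.v *)
Require Import Defs.
From Stdlib Require Import Reals Lra Lia.
Open Scope R_scope.

Lemma sum_one_minus (f : nat -> R) (c : R) (N : nat) :
  sum_f_R0 (fun i => 1 - c * f i) N = INR (S N) - c * sum_f_R0 f N.
Proof.
  induction N as [|N IH]; simpl sum_f_R0.
  - simpl. ring.
  - rewrite IH. rewrite (S_INR (S N)). ring.
Qed.

Lemma aw_pos r m : 0 < aw r m.
Proof. unfold aw, Rpower. apply exp_pos. Qed.

Lemma aw_le1 r m : (2 <= r)%nat -> (1 <= m)%nat -> aw r m <= 1.
Proof.
  intros hr hm. unfold aw.
  assert (H1 : 1 <= INR m) by (apply (le_INR 1); lia).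
  assert (Hr : 2 <= INR r) by (apply (le_INR 2); lia).
  apply Rle_trans with (Rpower (INR m) 0); [|rewrite Rpower_O by lra; lra].
  apply Rle_Rpower; [lra|].
  assert (0 < 1 / (INR r - 1)) by (apply Rdiv_lt_0_compat; lra). lra.
Qed.

Lemma aw_id r m : (2 <= r)%nat -> (1 <= m)%nat -> INR m * aw r m ^ r = aw r m.
Proof.
  intros hr hm. unfold aw.
  assert (H1 : 1 <= INR m) by (apply (le_INR 1); lia).
  assert (Hr : 2 <= INR r) by (apply (le_INR 2); lia).
  rewrite <- Rpower_pow by (unfold Rpower; apply exp_pos).
  rewrite Rpower_mult.
  transitivity (Rpower (INR m) 1 * Rpower (INR m) (- (1 / (INR r - 1)) * INR r)).
  { rewrite Rpower_1 by lra. reflexivity. }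
  rewrite <- Rpower_plus. f_equal. field. lra.
Qed.

Theorem lemma5p2 (s r : nat) (n : nat -> nat)
  (hs : (1 <= s)%nat) (hr : (2 <= r)%nat)
  (hn : forall i, (i <= s)%nat -> (1 <= n i)%nat)
  (hsum : Rpower (INR s) (INR r / (INR r - 1)) <= Ssum r s n) :
  (forall i, (i <= s)%nat -> 0 <= pw r s n i <= 1) /\
  sum_f_R0 (fun i => pw r s n i) s = 1 /\
  sum_f_R0 (fun i => INR (n i) * (1 - pw r s n i) ^ r) s <= 1.
Proof.
  assert (Hs : 1 <= INR s) by (apply (le_INR 1); lia).
  assert (Hr : 2 <= INR r) by (apply (le_INR 2); lia).
  set (t := Rpower (INR s) (INR r / (INR r - 1))) in *.
  assert (Ht : INR s <= t).
  { unfold t. apply Rle_trans with (Rpower (INR s) 1); [rewrite Rpower_1 by lra; lra|].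
    apply Rle_Rpower; [lra|].
    apply (Rmult_le_reg_r (INR r - 1)); [lra|].
    unfold Rdiv. rewrite Rmult_assoc, Rinv_l by lra. lra. }
  set (S0 := Ssum r s n) in *.
  assert (HS : 0 < S0) by lra.
  split; [|split].
  - intros i hi. unfold pw. fold S0.
    pose proof (aw_pos r (n i)). pose proof (aw_le1 r (n i) hr (hn i hi)).
    assert (0 <= INR s * aw r (n i) / S0 <= 1).
    { split.
      - apply Rmult_le_pos; [apply Rmult_le_pos; lra|]. left; apply Rinv_0_lt_compat; lra.
      - apply (Rmult_le_reg_r S0); [lra|]. unfold Rdiv. rewrite Rmult_assoc, Rinv_l by lra.
        assert (INR s * aw r (n i) <= INR s * 1) by (apply Rmult_le_compat_l; lra). lra. }
    lra.
  - unfold pw. fold S0.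
    rewrite (sum_eq _ (fun i => 1 - (INR s / S0) * aw r (n i))).
    2:{ intros i _. unfold Rdiv. ring. }
    rewrite sum_one_minus. fold (Ssum r s n). fold S0. rewrite S_INR. field. lra.
  - rewrite (sum_eq _ (fun i => aw r (n i) * (INR s / S0) ^ r)).
    2:{ intros i hi. unfold pw. fold S0.
        replace (1 - (1 - INR s * aw r (n i) / S0)) with (aw r (n i) * (INR s / S0)) by (field; lra).
        rewrite Rpow_mult_distr, <- Rmult_assoc, aw_id by auto. reflexivity. }
    rewrite <- scal_sum. fold (Ssum r s n). fold S0.
    assert (Hp : INR s ^ r <= S0 ^ (r - 1)).
    { assert (Htp : 0 < t) by lra.
      apply Rle_trans with (t ^ (r - 1)).
      - rewrite <- (Rpower_pow (r - 1) t) by lra. unfold t.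
        rewrite Rpower_mult, minus_INR by lia. simpl INR.
        replace (INR r / (INR r - 1) * (INR r - 1)) with (INR r) by (field; lra).
        rewrite Rpower_pow by lra. lra.
      - apply pow_incr. lra. }
    assert (Er : S0 ^ r = S0 * S0 ^ (r - 1)).
    { destruct r; [lia|]. simpl. rewrite Nat.sub_0_r. reflexivity. }
    assert (0 < S0 ^ (r - 1)) by (apply pow_lt; lra).
    unfold Rdiv. rewrite Rpow_mult_distr, pow_inv, Er.
    apply (Rmult_le_reg_r (S0 ^ (r-1))); [lra|].
    replace (INR s ^ r * / (S0 * S0 ^ (r - 1)) * S0 * S0 ^ (r - 1)) with (INR s ^ r) by (field; lra).
    lra.
Qed.
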